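(* Let $m,n,k$ be positive integers with $(m,k-1)=1$ and $n=\mathrm{ind}_m(k)$, let $G=G(m,n,k)=\langle a,b;\ a^m=1,\ b^n=1,\ b^{-1}ab=a^k\rangle$, and let $S\subseteq\mathbb{Z}_m$ be a base. Then \[ \Sigma_G(S)=\dot{\bigcup_{x\in S^*}}\Big(\bigcup_{y\in Y(x)} C(x,y)\Big), \] and the union over $x\in S^*$ is disjoint.
   Context: $\mathrm{ind}_m(k)$ is the least positive integer $d$ with $k^d\equiv 1\pmod m$. Every element of $G$ is written uniquely as $a^ib^j$ with $i\in\mathbb{Z}_m$, $j\in\mathbb{Z}_n$. For $t\ge 0$ let $k_t=k^t-1 \pmod m$. Maps are written on the right of their arguments, and the composition $\mu\circ\nu$ means ''first $\mu$, then $\nu$''. For $x,y\in\mathbb{Z}_m$ the mu-map $\mu(x,y):G\to G$ is defined by $(a^ib^j)\mu(x,y)=a^{N}$ with $N=xik^j-yk_j \pmod m$. The container is $C(x,y)=\{\mu(x,yz): z\in\mathbb{Z}_m\}$. For $S\subseteq\mathbb{Z}_m$, $I(S)$ denotes the elements of $S$ invertible in $\mathbb{Z}_m$, and $S^*$ is the multiplicative subsemigroup of $\mathbb{Z}_m$ generated by $S$. A base is a subset $S\subseteq\mathbb{Z}_m$ with $0\in S$ and $I(S)\neq\varnothing$. For a base $S$, $\Sigma_G(S)$ is the semigroup (under composition) of maps $G\to G$ generated by $\{\mu(s,z): s\in S,\ z\in\mathbb{Z}_m\}$. For $x\in S^*$, $Y(x)=\{s^*z:\ s^*\in S^*,\ z\in\mathbb{Z}_m,\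 \text{and there exists } s\in S \text{ with } x\equiv ss^*\pmod m\}$. *)

(* Defs.v *)
From mathcomp Require Import all_boot all_order all_algebra.
Set Implicit Arguments. Unset Strict Implicit. Unset Printing Implicit Defensive.

(* Elements of G(m,n,k) are the normal forms a^i b^j, i in Z_m, j in Z_n,
   represented as pairs (i, j) : 'I_m * 'I_n.  Z_m is represented by 'I_m
   (valid for every m >= 1, including m = 1). *)
Notation Gel m n := ('I_m * 'I_n)%type.

Lemma ord_pos (m : nat) (i : 'I_m) : 0 < m.
Proof. exact: leq_ltn_trans (leq0n i) (ltn_ord i). Qed.

(* the residue of N modulo m, as an element of 'I_m (i only witnesses m > 0) *)
Definition ordmod (m : nat) (i : 'I_m) (N : nat) : 'I_m :=
  Ordinal (ltn_pmod N (ord_pos i)).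

Definition mulZ (m : nat) (x y : 'I_m) : 'I_m := ordmod x (x * y).

Definition is_ind (m k n : nat) : Prop :=
  0 < n /\ k ^ n = 1 %[mod m] /\ (forall d, 0 < d -> d < n -> k ^ d <> 1 %[mod m]).

Notation Gmap m n := {ffun Gel m n -> Gel m n}.

(* the mu-map mu(x,y): a^i b^j |-> a^N, N = x i k^j - y k_j (mod m),
   k_j = k^j - 1 (mod m) *)
Definition mu (m n k : nat) (x y : 'I_m) : Gmap m n :=
  [ffun p : Gel m n =>
     let: (i, j) := p in
     (ordmod i (absz (((x * i * k ^ j)%:Z - (y * ((k ^ j - 1) %% m))%:Z) %% m)%Z),
      ordmod j 0)].

Definition compm (m n : nat) (f g : Gmap m n) : Gmap m n := [ffun p => g (f p)].

Definition container (m n k : nat) (x y : 'I_m) (f : Gmap m n) : Prop :=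
  exists z : 'I_m, f = mu n k x (mulZ y z).

Inductive Sstar (m : nat) (S : {set 'I_m}) : 'I_m -> Prop :=
| Sstar_gen s : s \in S -> @Sstar m S s
| Sstar_mul a b : @Sstar m S a -> @Sstar m S b -> @Sstar m S (mulZ a b).

Definition is_base (m : nat) (S : {set 'I_m}) : Prop :=
  (exists2 z, z \in S & val z = 0) /\ (exists2 u, u \in S & coprime u m).

Inductive Sigma (m n k : nat) (S : {set 'I_m}) : Gmap m n -> Prop :=
| Sigma_gen s z : s \in S -> @Sigma m n k S (mu n k s z)
| Sigma_comp f g : @Sigma m n k S f -> @Sigma m n k S g -> @Sigma m n k S (compm f g).

Definition Yset (m : nat) (S : {set 'I_m}) (x y : 'I_m) : Prop :=
  exists (st z s : 'I_m),
    [/\ Sstar S st, s \in S, x = mulZ s st & y = mulZ st z].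

Arguments container {m} n k x y f.

Definition block (m n k : nat) (S : {set 'I_m}) (x : 'I_m) (f : Gmap m n) : Prop :=
  exists2 y, Yset S x y & @container m n k x y f.

Arguments block {m} n k S x f.
Arguments Sigma {m} n k S _.

(* Main.v *)
Require Import Defs.
From mathcomp Require Import all_boot all_order all_algebra all_fingroup all_solvable.
From mathcomp Require Import ring.
Import GRing.Theory Num.Theory.

Lemma absmod (m : nat) (e : int) : 0 < m -> ((absz (e %% m)%Z) : int) = (e %% m)%Z.
Proof. by move=> mp; rewrite gez0_abs // modz_ge0 // -lt0n. Qed.

Lemma modzE' (a m : int) : (a %% m)%Z = (a - (a %/ m)%Z * m)%R.
Proof. by rewrite {2}(divz_eq a m); ring. Qed.

Lemma comp_mu m n k (x1 y1 x2 y2 : 'I_m) :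
  compm (mu n k x1 y1) (mu n k x2 y2) = mu n k (mulZ x2 x1) (mulZ x2 y1).
Proof.
have mp := ord_pos x1.
apply/ffunP => -[i j]; rewrite !ffunE /=.
congr pair; apply: val_inj => /=; last by rewrite mod0n.
rewrite mod0n expn0 subnn mod0n muln0 muln1 subr0.
congr (_ %% m)%N; apply/eqP; rewrite -eqz_nat !absmod //; apply/eqP.
rewrite !PoszM -!modz_nat absmod // modz_mod modzMmr.
set c := ((k ^ j - 1)%N %% m)%Z; set K := Posz (k ^ j).
apply/eqP; rewrite eqz_mod_dvd modzE' (modzE' (Posz (x2 * y1)%N)) !PoszM.
apply/dvdzP; exists ((((x2 * x1)%:Z %/ m)%Z * i * K - ((x2 * y1)%:Z %/ m)%Z * c))%R; ring.
Qed.

Section H.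
Variable m : nat.
Implicit Types a b c : 'I_m.

Lemma mulZC a b : mulZ a b = mulZ b a.
Proof. by apply: val_inj => /=; rewrite mulnC. Qed.

Lemma mulZA a b c : mulZ a (mulZ b c) = mulZ (mulZ a b) c.
Proof. by apply: val_inj => /=; rewrite modnMmr modnMml mulnA. Qed.

Lemma mulZ1 a (o : 'I_m) : val o = 1 %% m -> mulZ a o = a.
Proof. by move=> ho; apply: val_inj => /=; rewrite ho modnMmr muln1 modn_small. Qed.

Lemma mulZ0 a (o : 'I_m) : val o = 0 -> mulZ a o = o.
Proof. by move=> ho; apply: val_inj => /=; rewrite ho muln0 mod0n. Qed.
End H.
Arguments mulZC {m}. Arguments mulZA {m}. Arguments mulZ1 {m}. Arguments mulZ0 {m}.

Lemma mu_inj_x m n k (x y x' y' : 'I_m) : 0 < n ->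
  mu n k x y = mu n k x' y' -> x = x'.
Proof.
move=> np; pose j0 : 'I_n := Ordinal np.
move/(congr1 (fun f : Gmap m n => val (f (ordmod x 1, ordmod j0 0)).1)).
rewrite !ffunE /= mod0n expn0 subnn mod0n !muln0 !subr0 !muln1 !modz_nat /=.
by rewrite !modnMmr !muln1 !modn_mod !modn_small //; apply: val_inj.
Qed.

Lemma one_in m (S : {set 'I_m}) (u : 'I_m) : u \in S -> coprime u m ->
  Sstar S (ordmod u 1).
Proof.
move=> uS cu.
have mp := ord_pos u.
have H e : Sstar S (ordmod u (u ^ e.+1)).
  elim: e => [|e IH].
    have -> : ordmod u (u ^ 1) = u by apply: val_inj => /=; rewrite expn1 modn_small.
    exact: Sstar_gen.
  have -> : ordmod u (u ^ e.+2) = mulZ (ordmod u (u ^ e.+1)) u.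
    by apply: val_inj => /=; rewrite modnMml expnSr.
  exact: Sstar_mul IH (Sstar_gen uS).
have := H (totient m).-1; rewrite prednK ?totient_gt0 //.
have -> // : ordmod u (u ^ totient m) = ordmod u 1.
by apply: val_inj => /=; apply: Euler_exp_totient.
Qed.

Theorem theorem4p6 (m n k : nat) (S : {set 'I_m}) :
  0 < m -> 0 < n -> 0 < k -> coprime m (k - 1) -> is_ind m k n ->
  is_base S ->
  (forall f : {ffun 'I_m * 'I_n -> 'I_m * 'I_n},
      Sigma n k S f <-> exists2 x, Sstar S x & block n k S x f) /\
  (forall (x x' : 'I_m) (f : {ffun 'I_m * 'I_n -> 'I_m * 'I_n}),
      Sstar S x -> Sstar S x' -> block n k S x f -> block n k S x' f -> x = x').
Proof.
move=> mp np kp _ _ [_ [u uS cu]].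
have one1 := @one_in _ _ _ uS cu.
set one := ordmod u 1 in one1.
have hone : val one = 1 %% m by [].
pose zero : 'I_m := Ordinal mp.
split; last first.
  move=> x x' f _ _ [y _ [z ->]] [y' _ [z' ]].
  exact: mu_inj_x.
move=> f; split.
  elim=> [s z sS | f' g _ [x1 Hx1 [y1 [st1 [z1 [s1 [H1 H2 H3 H4]]]] [w1 ->]]]
                    _ [x2 Hx2 [y2 _ [w2 ->]]]].
    exists s; first exact: Sstar_gen.
    exists z; first by exists one, z, s; split => //; rewrite ?(mulZC one) mulZ1.
    by exists one; rewrite mulZ1.
  rewrite comp_mu; exists (mulZ x2 x1); first exact: Sstar_mul.
  exists (mulZ x2 (mulZ y1 w1)); last by exists one; rewrite (mulZ1 _ one).
  exists (mulZ x2 st1), (mulZ z1 w1), s1; split.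
  - exact: Sstar_mul.
  - exact: H2.
  - by rewrite H3 mulZA (mulZC x2 s1) -mulZA.
  - by rewrite H4 !mulZA.
move=> [x _ [y [st [z [s [Hst sS -> ->]]]] [z0 ->]]].
have Hmu : forall a, Sstar S a -> Sigma n k S (mu n k a zero).
  move=> a; elim=> [b bS | a1 b1 _ IHa _ IHb]; first exact: Sigma_gen.
  have := Sigma_comp IHb IHa; rewrite comp_mu (mulZ0 a1 zero) //.
have := Sigma_comp (@Sigma_gen _ n k S s (mulZ z z0) sS) (Hmu _ Hst).
by rewrite comp_mu (mulZC st s) mulZA.
Qed.
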